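(* Let $R$ be a unital ring and let $S$ be an inverse submonoid with zero of the multiplicative monoid of $R$. Then there is a Boolean inverse submonoid $S''$ of the multiplicative monoid of $R$ such that $S\subseteq S''\subseteq R$.
   Context: A Boolean inverse monoid is an inverse monoid with zero in which every pair of compatible elements ($s^{-1}t$, $st^{-1}$ idempotents) has a join with respect to the natural partial order, multiplication distributes over these joins, and the idempotents form a Boolean algebra (a distributive lattice with bottom in which each principal order ideal is a unital Boolean algebra). *)

(* Defs.v *)
From mathcomp Require Import all_boot all_algebra.
Set Implicit Arguments. Unset Strict Implicit. Unset Printing Implicit Defensive.
Import GRing.Theory.
Local Open Scope ring_scope.

Section InverseMonoids.
Variable R : pzRingType.
Variable S : R -> Prop.

Definition idem (e : R) : Prop := e * e = e.

Definition is_inv (s t : R) : Prop := S t /\ s * t * s = s /\ t * s * t = t.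

Definition inv_submonoid0 : Prop :=
  [/\ S 0, S 1,
      (forall a b, S a -> S b -> S (a * b))
    & (forall s, S s -> exists! t, is_inv s t)].

Definition nat_le (s t : R) : Prop := exists e, S e /\ idem e /\ s = e * t.

Definition compatible (s t : R) : Prop :=
  forall s' t', is_inv s s' -> is_inv t t' -> idem (s' * t) /\ idem (s * t').

Definition is_join (a b j : R) : Prop :=
  [/\ S j, nat_le a j, nat_le b j &
      forall u, S u -> nat_le a u -> nat_le b u -> nat_le j u].

Definition idemS (e : R) : Prop := S e /\ idem e.

Definition is_lubE (a b j : R) : Prop :=
  [/\ idemS j, nat_le a j, nat_le b j &
      forall u, idemS u -> nat_le a u -> nat_le b u -> nat_le j u].
Definition is_glbE (a b m : R) : Prop :=
  [/\ idemS m, nat_le m a, nat_le m b &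
      forall u, idemS u -> nat_le u a -> nat_le u b -> nat_le u m].

(* E(S) is a distributive lattice with bottom in which each principal order
   ideal is a unital Boolean algebra (i.e. relatively complemented below e) *)
Definition idem_boolean : Prop :=
  [/\ (forall e f, idemS e -> idemS f -> exists j, is_lubE e f j),
      (forall e f, idemS e -> idemS f -> exists m, is_glbE e f m),
      (forall e f g fg m ef eg, idemS e -> idemS f -> idemS g ->
          is_lubE f g fg -> is_glbE e fg m -> is_glbE e f ef -> is_glbE e g eg ->
          is_lubE ef eg m),
      (exists z, idemS z /\ forall e, idemS e -> nat_le z e)
    & (forall z, idemS z -> (forall e, idemS e -> nat_le z e) ->
       forall e a, idemS e -> idemS a -> nat_le a e ->
         exists b, [/\ idemS b, nat_le b e, is_glbE a b z & is_lubE a b e])].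

Definition boolean_inv_submonoid : Prop :=
  [/\ inv_submonoid0,
      (forall a b, S a -> S b -> compatible a b -> exists j, is_join a b j),
      (forall a b j c, S a -> S b -> S c -> compatible a b -> is_join a b j ->
          is_join (c * a) (c * b) (c * j) /\ is_join (a * c) (b * c) (j * c))
    & idem_boolean].

End InverseMonoids.

(* Main.v *)
Require Import Defs.
From mathcomp Require Import all_boot all_algebra.
Set Implicit Arguments. Unset Strict Implicit. Unset Printing Implicit Defensive.
Import GRing.Theory.
Local Open Scope ring_scope.

Section Prf.
Variable R : pzRingType.
Variable S : R -> Prop.
Hypothesis HS : inv_submonoid0 S.

Lemma S_1 : S 1. Proof. by case: HS. Qed.
Lemma S_0 : S 0. Proof. by case: HS. Qed.
Lemma S_mul a b : S a -> S b -> S (a*b). Proof. by case: HS => _ _ H _; apply: H. Qed.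
Lemma S_inv s : S s -> exists t, is_inv S s t.
Proof. by case: HS => _ _ _ H /H [t [h _]]; exists t. Qed.
Lemma S_uniq s t1 t2 : S s -> is_inv S s t1 -> is_inv S s t2 -> t1 = t2.
Proof. case: HS => _ _ _ H /H [t [_ U]] h1 h2. by rewrite -(U _ h1) (U _ h2). Qed.

Lemma ES_idem e f : S e -> idem e -> S f -> idem f -> idem (e*f).
Proof.
rewrite /idem => Se He Sf Hf. have Sef := S_mul Se Sf.
case: (S_inv Sef) => x [Sx [h1 h2]].
have hx : x = f*x*e.
  apply: (S_uniq Sef); first by split.
  split; first by apply: S_mul (S_mul Sf Sx) Se.
  split.
    have -> : e * f * (f * x * e) * (e * f) = e*(f*f)*x*(e*e)*f by rewrite !mulrA.
    by rewrite He Hf -[RHS]h1 !mulrA.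
  have -> : f * x * e * (e * f) * (f * x * e) = f * (x*(e*e)*(f*f)*x) * e by rewrite !mulrA.
  by rewrite He Hf -[x*e*f]mulrA h2.
have xx : x * x = x.
  have -> : x * x = f*x*e*(f*x*e) by rewrite -hx.
  have -> : f*x*e*(f*x*e) = f*(x*(e*f)*x)*e by rewrite !mulrA.
  by rewrite h2 -hx.
have : e*f = x.
  apply: (S_uniq Sx); first by split => //; split.
  by split => //; rewrite xx xx.
by move=> ->.
Qed.

Lemma ES_comm e f : S e -> idem e -> S f -> idem f -> e*f = f*e.
Proof.
move=> Se He Sf Hf.
have H1 := ES_idem Se He Sf Hf. have H2 := ES_idem Sf Hf Se He.
have Sef := S_mul Se Sf.
rewrite /idem in He Hf H1 H2.
apply: (S_uniq Sef).
- by split => //; rewrite H1 H1.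
- split; first exact: S_mul.
  have -> : e * f * (f * e) * (e * f) = e*(f*f)*(e*e)*f by rewrite !mulrA.
  have -> : f * e * (e * f) * (f * e) = f*(e*e)*(f*f)*e by rewrite !mulrA.
  by rewrite He Hf -mulrA H1 -mulrA H2.
Qed.

Inductive Bg : R -> Prop :=
| Bg_E e : S e -> idem e -> Bg e
| Bg_mul e f : Bg e -> Bg f -> Bg (e*f)
| Bg_compl e : Bg e -> Bg (1 - e).

Lemma B1 : Bg 1. Proof. by apply: Bg_E; [exact: S_1 | rewrite /idem mulr1]. Qed.
Lemma B0 : Bg 0. Proof. by rewrite -(subrr 1); apply: Bg_compl; exact: B1. Qed.

Lemma BcommE x e : Bg x -> S e -> idem e -> x*e = e*x.
Proof.
move=> Bx Se He; elim: Bx => {x}.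
- by move=> f Sf Hf; apply: ES_comm.
- by move=> f g _ h1 _ h2; rewrite -mulrA h2 !mulrA h1.
- by move=> f _ h; rewrite mulrBl mulrBr mul1r mulr1 h.
Qed.

Lemma Bcomm x y : Bg x -> Bg y -> x*y = y*x.
Proof.
move=> Bx By; elim: By => {y}.
- by move=> f Sf Hf; apply: BcommE.
- by move=> f g _ h1 _ h2; rewrite mulrA h1 -!mulrA h2.
- by move=> f _ h; rewrite mulrBl mulrBr mul1r mulr1 h.
Qed.

Lemma Bidem x : Bg x -> x*x = x.
Proof.
elim => {x}.
- by move=> f _ Hf.
- move=> f g Bf hf Bg' hg.
  by rewrite -mulrA [g*(f*g)]mulrA -(Bcomm Bf Bg') -mulrA hg mulrA hf.
- by move=> f _ h; rewrite mulrBl mul1r mulrBr mulr1 h subrr subr0.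
Qed.

Lemma Bjoin e f : Bg e -> Bg f -> Bg (e + f - e*f).
Proof.
move=> Be Bf.
have -> : e + f - e*f = 1 - (1-e)*(1-f).
  rewrite mulrBl mul1r !mulrBr !mulr1.
  by rewrite opprB [in RHS]opprB !addrA addrC !addrA addNr add0r addrAC.
by apply: Bg_compl; apply: Bg_mul; apply: Bg_compl.
Qed.

Lemma B_conj s t b : S s -> S t -> s*t*s = s -> t*s*t = t -> Bg b -> Bg (s*b*t).
Proof.
move=> Ss St h1 h2 Bb.
have Sts : S (t*s) by apply: S_mul.
have Its : idem (t*s) by rewrite /idem mulrA h2.
elim: Bb => {b}.
- move=> e Se He; apply: Bg_E; first by apply: S_mul => //; apply: S_mul.
  rewrite /idem.
  have -> : s * e * t * (s * e * t) = s * (e * (t*s)) * e * t by rewrite !mulrA.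
  rewrite (ES_comm Se He Sts Its).
  have -> : s * (t * s * e) * e * t = (s*t*s) * (e*e) * t by rewrite !mulrA.
  by rewrite h1 He.
- move=> e f Be he Bf hf.
  have -> : s*(e*f)*t = (s*e*t)*(s*f*t).
    have -> : s * e * t * (s * f * t) = s * (e * (t*s)) * f * t by rewrite !mulrA.
    rewrite (BcommE Be Sts Its).
    by rewrite !mulrA h1.
  exact: Bg_mul.
- move=> e Be he.
  have -> : s*(1-e)*t = (s*t)*(1 - s*e*t).
    rewrite mulrBr mulrBl mulrBr !mulr1.
    by rewrite !mulrA h1.
  apply: Bg_mul => //.
    apply: Bg_E; [exact: S_mul | by rewrite /idem mulrA h1].
  exact: Bg_compl.
Qed.

Definition pis x y := [/\ x*y*x = x, y*x*y = y,
  (forall b, Bg b -> Bg (x*b*y)) & (forall b, Bg b -> Bg (y*b*x))].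
Definition Sdd x := exists y, pis x y.

Lemma pis_sym x y : pis x y -> pis y x.
Proof. by case=> *; split. Qed.
Lemma pis_xy x y : pis x y -> Bg (x*y).
Proof. by case=> _ _ h _; rewrite -[x]mulr1; apply: h; exact: B1. Qed.
Lemma pis_yx x y : pis x y -> Bg (y*x).
Proof. by move/pis_sym/pis_xy. Qed.
Lemma pis_B b : Bg b -> pis b b.
Proof.
move=> Bb; have bb := Bidem Bb.
have H c : Bg c -> Bg (b*c*b).
  by move=> Bc; rewrite -mulrA (Bcomm Bc Bb) mulrA bb; apply: Bg_mul.
by split=> //; rewrite -mulrA bb.
Qed.
Lemma pis_mul x y u v : pis x y -> pis u v -> pis (x*u) (v*y).
Proof.
move=> [h1 h2 h3 h4] [k1 k2 k3 k4].
have Byx := pis_yx (And4 h1 h2 h3 h4). have Buv := pis_xy (And4 k1 k2 k3 k4).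
have Bxy := pis_xy (And4 h1 h2 h3 h4). have Bvu := pis_yx (And4 k1 k2 k3 k4).
split.
- have -> : x * u * (v * y) * (x * u) = x * ((u * v) * (y * x)) * u by rewrite !mulrA.
  rewrite (Bcomm Buv Byx).
  have -> : x * (y * x * (u * v)) * u = (x*y*x) * (u*v*u) by rewrite !mulrA.
  by rewrite h1 k1.
- have -> : v * y * (x * u) * (v * y) = v * ((y * x) * (u * v)) * y by rewrite !mulrA.
  rewrite (Bcomm Byx Buv).
  have -> : v * (u * v * (y * x)) * y = (v*u*v) * (y*x*y) by rewrite !mulrA.
  by rewrite h2 k2.
- move=> b Bb.
  have -> : x * u * b * (v * y) = x * (u*b*v) * y by rewrite !mulrA.
  by apply: h3; apply: k3.
- move=> b Bb.
  have -> : v * y * b * (x * u) = v * (y*b*x) * u by rewrite !mulrA.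
  by apply: k4; apply: h4.
Qed.

Lemma inv_uniq_gen x y z : x*y*x = x -> y*x*y = y -> x*z*x = x -> z*x*z = z ->
  Bg (x*y) -> Bg (y*x) -> Bg (x*z) -> Bg (z*x) -> y = z.
Proof.
move=> h1 h2 k1 k2 Bxy Byx Bxz Bzx.
have e1 : y = y*x*z.
  transitivity (y*(x*z*x)*y); first by rewrite k1 h2.
  transitivity (y*((x*z)*(x*y))); first by rewrite !mulrA.
  by rewrite (Bcomm Bxz Bxy) !mulrA h2.
have e2 : y*x*z = z.
  transitivity ((y*x)*((z*x)*z)); first by rewrite k2.
  transitivity (((y*x)*(z*x))*z); first by rewrite !mulrA.
  rewrite (Bcomm Byx Bzx).
  transitivity (z*(x*y*x)*z); first by rewrite !mulrA.
  by rewrite h1.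
by rewrite e1 e2.
Qed.

Lemma pis_uniq x y z : pis x y -> pis x z -> y = z.
Proof.
move=> p q; case: (p) => h1 h2 _ _; case: (q) => k1 k2 _ _.
by apply: (inv_uniq_gen h1 h2 k1 k2); [apply: pis_xy p|apply: pis_yx p|apply: pis_xy q|apply: pis_yx q].
Qed.

Lemma pis_idem x y : pis x y -> x*x = x -> Bg x /\ Bg y.
Proof.
move=> p xx; case: (p) => h1 h2 _ _.
have By : Bg y.
  rewrite -h2 -{1}xx; have -> : y*(x*x)*y = (y*x)*(x*y) by rewrite !mulrA.
  by apply: Bg_mul; [apply: pis_yx p | apply: pis_xy p].
split=> //.
rewrite -h1 -(Bidem By).
have -> : x*(y*y)*x = (x*y)*(y*x) by rewrite !mulrA.
by apply: Bg_mul; [apply: pis_xy p | apply: pis_yx p].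
Qed.

Lemma cross x y v b : pis x y -> Bg b -> x*v = 0 -> x*b*v = 0.
Proof.
move=> p Bb xv; case: (p) => h1 _ _ _.
have Byx := pis_yx p.
by rewrite -{1}h1 -[x*y*x]mulrA -[x*(y*x)*b]mulrA (Bcomm Byx Bb) !mulrA -mulrA xv mulr0.
Qed.

Lemma pis_add x y u v : pis x y -> pis u v -> y*u = 0 -> x*v = 0 -> v*x = 0 -> u*y = 0 ->
  pis (x+u) (y+v).
Proof.
move=> p q yu xv vx uy.
case: (p) => h1 h2 h3 h4; case: (q) => k1 k2 k3 k4.
have xu : x*y*u = 0 by rewrite -mulrA yu mulr0.
have ux : u*v*x = 0 by rewrite -mulrA vx mulr0.
have yv : y*x*v = 0 by rewrite -mulrA xv mulr0.
have vy : v*u*y = 0 by rewrite -mulrA uy mulr0.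
have sum e f : Bg e -> Bg f -> e*f = 0 -> Bg (e+f).
  by move=> Be Bf ef; rewrite -[e+f]subr0 -ef; apply: Bjoin.
split.
- by rewrite !mulrDl !mulrDr xv uy !addr0 !add0r xu ux !addr0 !add0r h1 k1.
- by rewrite !mulrDl !mulrDr yu vx !addr0 !add0r yv vy !addr0 !add0r h2 k2.
- move=> b Bb.
  rewrite !mulrDl !mulrDr (cross p Bb xv) (cross q Bb uy) addr0 add0r.
  apply: sum; [exact: h3|exact: k3|].
  by rewrite !mulrA -[x*b*y*u]mulrA yu mulr0 !mul0r.
- move=> b Bb.
  rewrite !mulrDl !mulrDr (cross (pis_sym p) Bb yu) (cross (pis_sym q) Bb vx) addr0 add0r.
  apply: sum; [exact: h4|exact: k4|].
  by rewrite !mulrA -[y*b*x*v]mulrA xv mulr0 !mul0r.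
Qed.

Lemma Sdd_B b : Bg b -> Sdd b.
Proof. by move=> Bb; exists b; apply: pis_B. Qed.
Lemma Sdd_S s : S s -> Sdd s.
Proof.
move=> Ss; case: (S_inv Ss) => t [St [h1 h2]]; exists t; split=> // b Bb.
- exact: B_conj.
- exact: B_conj.
Qed.
Lemma Sdd_mul x u : Sdd x -> Sdd u -> Sdd (x*u).
Proof. by move=> [y p] [v q]; exists (v*y); apply: pis_mul. Qed.
Lemma Sdd_idem e : Sdd e -> idem e -> Bg e.
Proof. by move=> [y p] ee; case: (pis_idem p ee). Qed.
Lemma is_inv_B s t : Sdd s -> is_inv Sdd s t -> Bg (s*t) /\ Bg (t*s).
Proof.
move=> Ss [St [h1 h2]]; split; apply: Sdd_idem.
- exact: Sdd_mul.
- by rewrite /idem mulrA h1.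
- exact: Sdd_mul.
- by rewrite /idem mulrA h2.
Qed.
Lemma Sdd_uniq s t1 t2 : Sdd s -> is_inv Sdd s t1 -> is_inv Sdd s t2 -> t1 = t2.
Proof.
move=> Ss i1 i2; case: (is_inv_B Ss i1) => B1' B2'; case: (is_inv_B Ss i2) => B3 B4.
case: i1 => _ [h1 h2]; case: i2 => _ [k1 k2].
exact: (inv_uniq_gen h1 h2 k1 k2).
Qed.

Lemma Sdd_inv0 : inv_submonoid0 Sdd.
Proof.
split.
- exact: Sdd_B B0.
- exact: Sdd_B B1.
- exact: Sdd_mul.
- move=> s Ss; case: (Ss) => t p; exists t; split.
    by case: (p) => h1 h2 _ _; split=> //; exists s; apply: pis_sym.
  by move=> t' i; apply: (Sdd_uniq Ss) => //; case: (p) => h1 h2 _ _; split=> //; exists s; apply: pis_sym.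
Qed.

Lemma nleB x u : nat_le Sdd x u -> exists e, Bg e /\ x = e*u.
Proof. by case=> e [Se [He ->]]; exists e; split=> //; apply: Sdd_idem. Qed.
Lemma Bnle e x u : Bg e -> x = e*u -> nat_le Sdd x u.
Proof. by move=> Be ->; exists e; split; [apply: Sdd_B | split => //; apply: Bidem]. Qed.
Lemma nle_antisym x u : nat_le Sdd x u -> nat_le Sdd u x -> x = u.
Proof.
move=> /nleB [e [Be ->]] /nleB [f [Bf hu]].
have hu' : u = e*f*u by rewrite {1}hu mulrA (Bcomm Bf Be).
by rewrite {1}hu' !mulrA (Bidem Be) -hu'.
Qed.

Lemma join_canon a a' b b' : pis a a' -> pis b b' -> idem (a'*b) -> idem (a*b') ->
  is_join Sdd a b (a + b*(1 - a'*a)).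
Proof.
move=> pa pb ip iq.
case: (pa) => h1 h2 _ _; case: (pb) => k1 k2 _ _.
have pp := pis_mul (pis_sym pa) pb.
case: (pis_idem pp ip) => Bp Bp'.
have E1 : b'*a = a'*b by apply: (pis_uniq pp); apply: pis_B.
have pq := pis_mul pa (pis_sym pb).
case: (pis_idem pq iq) => Bq Bq'.
have E2 : b*a' = a*b' by apply: (pis_uniq pq); apply: pis_B.
have Baa := pis_yx pa. have Bbb := pis_yx pb.
have Baa' := pis_xy pa. have Bbb' := pis_xy pb.
set c := 1 - a'*a.
have Bc : Bg c by apply: Bg_compl.
have ac : a*c = 0 by rewrite /c mulrBr mulr1 mulrA h1 subrr.
have ca : c*a' = 0 by rewrite /c mulrBl mul1r h2 subrr.
have pc : a'*b*c = 0.
  by rewrite /c mulrBr mulr1 (Bcomm Bp Baa) !mulrA h2 subrr.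
have key : a*(b'*b) = b*(a'*a).
  transitivity (a*((b'*b)*(a'*a))); first by rewrite -{1}h1 (Bcomm Bbb Baa) !mulrA.
  transitivity ((a*b')*(b*a')*a); first by rewrite !mulrA.
  by rewrite E2 iq -E2 -!mulrA.
have pj : pis (a + b*c) (a' + c*b').
  apply: pis_add => //.
  - by apply: pis_mul => //; apply: pis_B.
  - by rewrite mulrA pc.
  - by rewrite mulrA ac mul0r.
  - by rewrite -mulrA E1 (Bcomm Bc Bp) pc.
  - by rewrite -mulrA ca mulr0.
have jeq : a + b*c = a + b - b*a'*a by rewrite /c mulrBr mulr1 addrA mulrA.
split.
- by exists (a' + c*b').
- apply: (Bnle Baa').
  by rewrite mulrDr !mulrA h1 -[a*a'*b]mulrA -[a*(a'*b)*c]mulrA pc mulr0 addr0.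
- apply: (Bnle Bbb').
  rewrite mulrDr !mulrA k1 -[b*b'*a]mulrA E1.
  have -> : b*(a'*b) = b*(b'*a) by rewrite E1.
  have -> : b * (b' * a) = b*(a'*a).
    rewrite -key E1 mulrA E2 -mulrA //.
  by rewrite -mulrDr /c addrC subrK mulr1.
- move=> u Su /nleB [e [Be ea]] /nleB [f [Bf fb]].
  have eA : e*a = a by rewrite ea mulrA (Bidem Be).
  have fB : f*b = b by rewrite fb mulrA (Bidem Bf).
  have au : a*a'*u = a.
    have -> : a*a' = a*a'*e by rewrite (Bcomm Baa' Be) mulrA eA.
    by rewrite -mulrA -ea h1.
  have bu : b*b'*u = b.
    have -> : b*b' = b*b'*f by rewrite (Bcomm Bbb' Bf) mulrA fB.
    by rewrite -mulrA -fb k1.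
  apply: (Bnle (Bjoin Baa' Bbb')).
  rewrite mulrBl !mulrDl au bu -[a*a'*(b*b')*u]mulrA -[b*b'*u]mulrA.
  rewrite (mulrA b b' u) bu jeq -[a*a'*b]mulrA -E1 mulrA.
  by rewrite -E2.
Qed.

Lemma cfacts a a' b b' : pis a a' -> pis b b' -> idem (a'*b) -> idem (a*b') ->
  [/\ Bg (a'*b), Bg (a*b'), b'*a = a'*b & b*a' = a*b'].
Proof.
move=> pa pb ip iq.
have pp := pis_mul (pis_sym pa) pb.
case: (pis_idem pp ip) => Bp Bp'.
have pq := pis_mul pa (pis_sym pb).
case: (pis_idem pq iq) => Bq Bq'.
split=> //; [apply: (pis_uniq pp) | apply: (pis_uniq pq)]; exact: pis_B.
Qed.

Lemma pis_is_inv x y : pis x y -> is_inv Sdd x y.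
Proof. by move=> p; case: (p) => h1 h2 _ _; split=> //; exists x; apply: pis_sym. Qed.

Lemma join_exists a b : Sdd a -> Sdd b -> compatible Sdd a b -> exists j, is_join Sdd a b j.
Proof.
move=> [a' pa] [b' pb] cab.
case: (cab a' b' (pis_is_inv pa) (pis_is_inv pb)) => ip iq.
by eexists; apply: join_canon ip iq.
Qed.

Lemma join_uniq a b j1 j2 : is_join Sdd a b j1 -> is_join Sdd a b j2 -> j1 = j2.
Proof.
move=> [S1 a1 b1 l1] [S2 a2 b2 l2].
by apply: nle_antisym; [apply: l1 | apply: l2].
Qed.

Lemma distr a b j c : Sdd a -> Sdd b -> Sdd c -> compatible Sdd a b -> is_join Sdd a b j ->
  is_join Sdd (c*a) (c*b) (c*j) /\ is_join Sdd (a*c) (b*c) (j*c).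
Proof.
move=> [a' pa] [b' pb] [d pc] cab J.
case: (cab a' b' (pis_is_inv pa) (pis_is_inv pb)) => ip iq.
have -> := join_uniq J (join_canon pa pb ip iq).
case: (cfacts pa pb ip iq) => Bp Bq E1 E2.
case: (pa) => h1 h2 h3 h4; case: (pb) => k1 k2 k3 k4; case: (pc) => m1 m2 m3 m4.
have Baa := pis_yx pa. have Bbb := pis_yx pb.
have Baa' := pis_xy pa. have Bbb' := pis_xy pb.
have Bcd := pis_xy pc. have Bdc := pis_yx pc.
split.
- have pca := pis_mul pc pa. have pcb := pis_mul pc pb.
  have ip' : idem (a' * d * (c * b)).
    have -> : a' * d * (c * b) = (a'*b)*(b'*(d*c)*b).
      transitivity (a'*((d*c)*b)); first by rewrite !mulrA.
      transitivity (a'*((d*c)*(b*b'*b))); first by rewrite k1.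
      transitivity (a'*(((d*c)*(b*b'))*b)); first by rewrite !mulrA.
      by rewrite (Bcomm Bdc Bbb') !mulrA.
    by rewrite /idem Bidem //; apply: Bg_mul => //; apply: k4.
  have iq' : idem (c * a * (b' * d)).
    have -> : c * a * (b' * d) = c*(a*b')*d by rewrite !mulrA.
    by rewrite /idem Bidem //; apply: m3.
  have JJ := join_canon pca pcb ip' iq'.
  suff -> : c * (a + b * (1 - a' * a)) = c * a + c * b * (1 - a' * d * (c * a)) by [].
  rewrite mulrDr mulrA; congr (_ + _).
  rewrite !mulrBr !mulr1; congr (_ - _).
  symmetry.
  transitivity (c*((b*a')*(d*c))*a); first by rewrite !mulrA.
  rewrite E2 -(Bcomm Bdc Bq) -E2.
  transitivity ((c*d*c)*b*a'*a); first by rewrite !mulrA.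
  by rewrite m1 !mulrA.
- have pac := pis_mul pa pc. have pbc := pis_mul pb pc.
  have ip' : idem (d * a' * (b * c)).
    have -> : d * a' * (b * c) = d*(a'*b)*c by rewrite !mulrA.
    by rewrite /idem Bidem //; apply: m4.
  have iq' : idem (a * c * (d * b')).
    have -> : a * c * (d * b') = (a*(c*d)*a')*(a*b').
      transitivity (a*(c*d)*b'); first by rewrite !mulrA.
      transitivity ((a*a'*a)*(c*d)*b'); first by rewrite h1.
      transitivity (a*(a'*a*(c*d))*b'); first by rewrite !mulrA.
      by rewrite (Bcomm Baa Bcd) !mulrA.
    by rewrite /idem Bidem //; apply: Bg_mul => //; apply: h3.
  have JJ := join_canon pac pbc ip' iq'.
  suff -> : (a + b * (1 - a' * a)) * c = a * c + b * c * (1 - d * a' * (a * c)) by [].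
  rewrite mulrDl; congr (_ + _).
  rewrite !mulrBr !mulrBl !mulr1; congr (_ - _).
  symmetry.
  transitivity (b*((c*d)*(a'*a))*c); first by rewrite !mulrA.
  rewrite (Bcomm Bcd Baa).
  transitivity (b*a'*a*(c*d*c)); first by rewrite !mulrA.
  by rewrite m1 !mulrA.
Qed.

Lemma B_idemS e : Bg e -> idemS Sdd e.
Proof. by move=> Be; split; [apply: Sdd_B | apply: Bidem]. Qed.
Lemma idemS_B e : idemS Sdd e -> Bg e.
Proof. by case=> h1 h2; apply: Sdd_idem. Qed.
Lemma nleBB e f : Bg f -> nat_le Sdd e f -> e = e*f.
Proof. by move=> Bf /nleB [g [Bg' ->]]; rewrite -mulrA (Bidem Bf). Qed.
Lemma BBnle e f : Bg e -> e = e*f -> nat_le Sdd e f.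
Proof. by move=> Be h; apply: (Bnle Be). Qed.

Lemma lub_canon e f : Bg e -> Bg f -> is_lubE Sdd e f (e + f - e*f).
Proof.
move=> Be Bf; have Bj := Bjoin Be Bf.
have ee := Bidem Be; have ff := Bidem Bf; have ef := Bcomm Be Bf.
split.
- exact: B_idemS.
- apply: (BBnle Be).
  by rewrite mulrBr mulrDr ee mulrA ee addrK.
- apply: (BBnle Bf).
  by rewrite mulrBr mulrDr ff mulrA -ef -mulrA ff ef addrAC subrr add0r.
- move=> u /idemS_B Bu /(nleBB Bu) eu /(nleBB Bu) fu.
  apply: (BBnle Bj).
  by rewrite mulrBl mulrDl -eu -fu -mulrA -fu.
Qed.

Lemma glb_canon e f : Bg e -> Bg f -> is_glbE Sdd e f (e*f).
Proof.
move=> Be Bf; have Bm := Bg_mul Be Bf.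
have ee := Bidem Be; have ff := Bidem Bf; have ef := Bcomm Be Bf.
split.
- exact: B_idemS.
- by apply: (BBnle Bm); rewrite -mulrA -ef mulrA ee.
- by apply: (BBnle Bm); rewrite -mulrA ff.
- move=> u /idemS_B Bu /(nleBB Be) ue /(nleBB Bf) uf.
  by apply: (BBnle Bu); rewrite mulrA -ue.
Qed.

Lemma lub_uniq e f j1 j2 : is_lubE Sdd e f j1 -> is_lubE Sdd e f j2 -> j1 = j2.
Proof.
move=> [I1 a1 b1 l1] [I2 a2 b2 l2].
by apply: nle_antisym; [apply: l1 | apply: l2].
Qed.
Lemma glb_uniq e f j1 j2 : is_glbE Sdd e f j1 -> is_glbE Sdd e f j2 -> j1 = j2.
Proof.
move=> [I1 a1 b1 l1] [I2 a2 b2 l2].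
by apply: nle_antisym; [apply: l2 | apply: l1].
Qed.

Lemma Sdd_bool : idem_boolean Sdd.
Proof.
split.
- move=> e f /idemS_B Be /idemS_B Bf; eexists; exact: lub_canon.
- move=> e f /idemS_B Be /idemS_B Bf; eexists; exact: glb_canon.
- move=> e f g fg m ef eg /idemS_B Be /idemS_B Bf /idemS_B Bg' Hfg Hm Hef Heg.
  have Hfg' := lub_canon Bf Bg'.
  rewrite (lub_uniq Hfg Hfg') in Hm.
  have -> := glb_uniq Hm (glb_canon Be (Bjoin Bf Bg')).
  rewrite (glb_uniq Hef (glb_canon Be Bf)) (glb_uniq Heg (glb_canon Be Bg')).
  have -> : e * (f + g - f * g) = e*f + e*g - e*f*(e*g).
    rewrite mulrBr mulrDr; congr (_ - _).
    symmetry; transitivity (e*(f*e)*g); first by rewrite !mulrA.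
    by rewrite -(Bcomm Be Bf) !mulrA (Bidem Be).
  by apply: lub_canon; apply: Bg_mul.
- exists 0; split; first exact: B_idemS B0.
  by move=> e _; apply: (BBnle B0); rewrite mul0r.
- move=> z Iz zb e a /idemS_B Be /idemS_B Ba /(nleBB Be) ae.
  have z0 : z = 0.
    by rewrite (nleBB B0 (zb _ (B_idemS B0))) mulr0.
  have Bb : Bg (e*(1-a)) by apply: Bg_mul => //; apply: Bg_compl.
  have ab : a*(e*(1-a)) = 0 by rewrite mulrA -ae mulrBr mulr1 (Bidem Ba) subrr.
  exists (e*(1-a)); split.
  + exact: B_idemS.
  + apply: (BBnle Bb).
    by rewrite -mulrA (Bcomm (Bg_compl Ba) Be) mulrA (Bidem Be).
  + by rewrite z0 -ab; apply: glb_canon.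
  + have := lub_canon Ba Bb.
    by rewrite ab subr0 mulrBr mulr1 -(Bcomm Ba Be) -ae [a + (e - a)]addrC subrK.
Qed.

Theorem main_thm : exists S'' : R -> Prop, boolean_inv_submonoid S'' /\ (forall x, S x -> S'' x).
Proof.
exists Sdd; split; last by move=> x; apply: Sdd_S.
split.
- exact: Sdd_inv0.
- exact: join_exists.
- move=> a b j c Sa Sb Sc cab J; exact: distr.
- exact: Sdd_bool.
Qed.
End Prf.

Unset Implicit Arguments.
Set Strict Implicit.

Theorem proposition3p2 (R : pzRingType) (S : R -> Prop) :
  inv_submonoid0 S ->
  exists S'' : R -> Prop, boolean_inv_submonoid S'' /\ (forall x, S x -> S'' x).
Proof. move=> HS; exact: main_thm. Qed.
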